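(* Let $X$ be a Minkowski space of dimension at least $2$ whose closed unit ball is a polytope with $f$ facets. Then $m(X)\leq f-1$.
   Context: A Minkowski space is a finite-dimensional real normed space $(X,\|\cdot\|)$. For a set $S\subseteq X$, its midpoint set is $M(S)=\{\tfrac12(x+y): x,y\in S,\ x\neq y\}$. A set $S\subseteq X$ is an M-set if every vector in $M(S)$ has norm exactly $1$ and every vector in $S$ has norm strictly greater than $1$. $m(X)$ denotes the largest cardinality of an M-set in $X$ if such a largest finite cardinality exists, and $m(X)=\infty$ otherwise. *)

(* Defs.v *)
From Stdlib Require Import Reals List.
From mathcomp Require Import ssreflect ssrbool ssrnat fintype bigop.

Open Scope R_scope.

(* The Minkowski space X of dimension n, realised as R^n with a norm N. *)
Definition vec (n : nat) := 'I_n -> R.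

Definition vzero {n : nat} : vec n := fun _ => 0.
Definition vadd {n : nat} (x y : vec n) : vec n := fun i => x i + y i.
Definition vscale {n : nat} (c : R) (x : vec n) : vec n := fun i => c * x i.
Definition dot {n : nat} (a x : vec n) : R := \big[Rplus/0]_(i < n) (a i * x i).

Definition is_norm {n : nat} (N : vec n -> R) : Prop :=
  (forall x, N x = 0 -> x = vzero) /\
  (forall c x, N (vscale c x) = Rabs c * N x) /\
  (forall x y, N (vadd x y) <= N x + N y).

Definition midpt {n : nat} (x y : vec n) : vec n := vscale (/ 2) (vadd x y).

Definition M_set {n : nat} (N : vec n -> R) (S : vec n -> Prop) : Prop :=
  (forall x y, S x -> S y -> x <> y -> N (midpt x y) = 1) /\
  (forall x, S x -> N x > 1).

(* The closed unit ball {x | N x <= 1} is a polytope with exactly f facets: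
   it equals the intersection of f half-spaces {x | <a_i, x> <= 1}, and this
   representation is irredundant (each inequality cuts off a point that all
   other inequalities admit).  For a full-dimensional polytope with 0 in its
   interior (automatic for a norm ball), the inequalities of an irredundant
   such representation are in bijection with the facets. *)
Definition ball_polytope_facets {n : nat} (N : vec n -> R) (f : nat) : Prop :=
  exists a : nat -> vec n,
    (forall x, N x <= 1 <-> (forall i, (i < f)%nat -> dot (a i) x <= 1)) /\
    (forall i, (i < f)%nat ->
       exists x, dot (a i) x > 1 /\
         (forall j, (j < f)%nat -> j <> i -> dot (a j) x <= 1)).

(* Main.v *)
Require Import Defs.
From Stdlib Require Import Reals List.
From mathcomp Require Import ssreflect ssrbool ssrnat fintype bigop.
From HB Require Import structures.
From Stdlib Require Import Lra ClassicalEpsilon FunctionalExtensionality Classical.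
From mathcomp Require Import zify eqtype.
Open Scope R_scope.

HB.instance Definition _ := Monoid.isComLaw.Build R 0 Rplus (fun x y z => Logic.eq_sym (Rplus_assoc x y z)) Rplus_comm Rplus_0_l.

Lemma dot_add n (a x y : vec n) : dot a (vadd x y) = dot a x + dot a y.
Proof. rewrite /dot /vadd -big_split /=. apply: eq_bigr => i _. ring. Qed.

Lemma dot_scale n (a x : vec n) c : dot a (vscale c x) = c * dot a x.
Proof.
rewrite /dot /vscale. elim/big_rec2: _ => [|i y1 y2 _ ->]; ring.
Qed.

Lemma dot_mid n (a x y : vec n) : dot a (midpt x y) = / 2 * (dot a x + dot a y).
Proof. by rewrite /midpt dot_scale dot_add. Qed.

Lemma dot_zero n (a : vec n) : dot a vzero = 0.
Proof. have -> : (vzero : vec n) = vscale 0 vzero by apply: functional_extensionality => i; rewrite /vscale /vzero; ring.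
rewrite dot_scale; ring. Qed.

Section Norm.
Variables (n : nat) (N : vec n -> R) (HN : is_norm N).

Lemma N0 : N vzero = 0.
Proof. case: HN => _ [Hs _].
have -> : (vzero : vec n) = vscale 0 vzero by apply: functional_extensionality => i; rewrite /vscale /vzero; ring.
rewrite Hs Rabs_R0; ring. Qed.

Lemma Nopp x : N (vscale (-1) x) = N x.
Proof. case: HN => _ [Hs _]. rewrite Hs Rabs_Ropp Rabs_R1; ring. Qed.

Lemma Nge0 x : 0 <= N x.
Proof. case: HN => _ [Hs Ht].
have H := Ht x (vscale (-1) x).
have E : vadd x (vscale (-1) x) = vzero by apply: functional_extensionality => i; rewrite /vadd /vscale /vzero; ring.
rewrite E N0 Nopp in H. lra. Qed.

Lemma Npos x : x <> vzero -> 0 < N x.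
Proof. move=> Hx. case: HN => Hz _. have := Nge0 x. case=> // H. by case: Hx; apply: Hz. Qed.
End Norm.
Lemma finmax (g : nat -> R) m B : (forall i, (i < m)%nat -> g i < B) ->
  exists c, c < B /\ forall i, (i < m)%nat -> g i <= c.
Proof.
elim: m => [|m IH] H.
  exists (B - 1); split; [lra| by []].
have [c [Hc Hg]] : exists c, c < B /\ forall i, (i < m)%nat -> g i <= c.
  apply: IH => i Hi; apply: H; lia.
exists (Rmax c (g m)); split.
  apply: Rmax_lub_lt => //; apply: H; lia.
move=> i Hi. have : (i < m)%nat \/ i = m by lia.
case=> [Hl|->]; [apply: Rle_trans (Rmax_l _ _); exact: Hg | exact: Rmax_r].
Qed.

Lemma eps_small (c d : nat -> R) (P : nat -> Prop) m :
  (forall j, (j < m)%nat -> P j -> 0 < d j) ->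
  exists e, 0 < e /\ forall j, (j < m)%nat -> P j -> e * c j <= d j.
Proof.
elim: m => [|m IH] H.
  exists 1; split; [lra| by []].
have [e [He Hj]] : exists e, 0 < e /\ forall j, (j < m)%nat -> P j -> e * c j <= d j.
  apply: IH => j Hj; apply: H; lia.
case: (classic (P m)) => Pm.
- have dpos : 0 < d m by apply: H => //; lia.
  have Ha : 0 <= Rabs (c m) := Rabs_pos _.
  set e' := d m / (Rabs (c m) + 1).
  have He' : 0 < e' by rewrite /e'; apply: Rdiv_lt_0_compat; lra.
  exists (Rmin e e'); split; first by apply: Rmin_pos.
  have Hmin1 := Rmin_l e e'. have Hmin2 := Rmin_r e e'.
  have Hpos : 0 < Rmin e e' by apply: Rmin_pos.
  move=> j Hjm Pj. have : (j < m)%nat \/ j = m by lia.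
  case=> [Hl|->].
  + have := Hj j Hl Pj. case: (Rle_lt_dec 0 (c j)) => Hc Hle.
    * apply: Rle_trans Hle. by apply: Rmult_le_compat_r.
    * have : 0 < d j by apply: H => //; lia.
      nra.
  + have Hcm : c m <= Rabs (c m) := RRle_abs _.
    have E : e' * (Rabs (c m) + 1) = d m by rewrite /e'; field; lra.
    nra.
- exists e; split => // j Hjm Pj. have : (j < m)%nat \/ j = m by lia.
  case=> [Hl|E]; [exact: Hj|by subst j].
Qed.

Section Ball.
Variables (n : nat) (N : vec n -> R) (HN : is_norm N) (f : nat) (a : nat -> vec n).
Hypothesis Hball : forall x, N x <= 1 <-> (forall i, (i < f)%nat -> dot (a i) x <= 1).

Lemma N_scale c x : N (vscale c x) = Rabs c * N x.
Proof. by case: HN => _ [Hs _]. Qed.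

Lemma a_le_N i x : (i < f)%nat -> dot (a i) x <= N x.
Proof.
move=> Hi. case: (classic (x = vzero)) => [->|Hx].
  rewrite dot_zero (N0 _ _ HN); lra.
have Hp := Npos _ _ HN _ Hx.
have H1 : N (vscale (/ N x) x) <= 1.
  rewrite N_scale Rabs_right; last by left; apply: Rinv_0_lt_compat.
  rewrite Rinv_l; lra.
have := (proj1 (Hball _) H1) i Hi. rewrite dot_scale => H.
have := Rmult_le_compat_l (N x) _ _ (Rlt_le _ _ Hp) H.
rewrite -Rmult_assoc Rinv_r; lra.
Qed.

Lemma N_le c x : 0 < c -> (forall i, (i < f)%nat -> dot (a i) x <= c) -> N x <= c.
Proof.
move=> Hc H.
have : N (vscale (/ c) x) <= 1.
  apply/Hball => i Hi. rewrite dot_scale.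
  have := Rmult_le_compat_l (/ c) _ _ (Rlt_le _ _ (Rinv_0_lt_compat _ Hc)) (H i Hi).
  rewrite Rinv_l; lra.
rewrite N_scale Rabs_right; last by left; apply: Rinv_0_lt_compat.
move=> H1. have := Rmult_le_compat_l c _ _ (Rlt_le _ _ Hc) H1.
rewrite -Rmult_assoc Rinv_r; lra.
Qed.

Lemma tight x : 0 < N x -> exists i, (i < f)%nat /\ N x <= dot (a i) x.
Proof.
move=> Hp. apply: NNPP => Hno.
have H : forall i, (i < f)%nat -> dot (a i) x < N x.
  move=> i Hi. apply: Rnot_le_lt => Hle. apply: Hno; by exists i.
have [c [Hc Hi]] := finmax (fun i => dot (a i) x) f (N x) H.
have : N x <= Rmax c (N x / 2).
  apply: N_le; first by apply: Rlt_le_trans (Rmax_r _ _); lra.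
  move=> i Hif; apply: Rle_trans (Rmax_l _ _); exact: Hi.
apply: Rlt_not_le. apply: Rmax_lub_lt; lra.
Qed.

Lemma exceed x : 1 < N x -> exists i, (i < f)%nat /\ 1 < dot (a i) x.
Proof. move=> H. have [i [Hi Hle]] := tight x ltac:(lra). exists i; split => //; lra. Qed.

Lemma unbounded z : z <> vzero -> (forall l, (l < f)%nat -> dot (a l) z <= 0) -> False.
Proof.
move=> Hz H. have Hp := Npos _ _ HN _ Hz.
have : N (vscale (2 / N z) z) <= 1.
  apply/Hball => i Hi. rewrite dot_scale.
  have := H i Hi. have : 0 < 2 / N z by apply: Rdiv_lt_0_compat; lra.
  nra.
rewrite N_scale Rabs_right; last by left; apply: Rdiv_lt_0_compat; lra.
have -> : 2 / N z * N z = 2 by field; lra.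
lra.
Qed.

End Ball.
Lemma shrink e e' c d : 0 < e' -> e' <= e -> e * c <= d -> 0 < d -> e' * c <= d.
Proof. move=> H1 H2 H3 H4. case: (Rle_lt_dec 0 c) => Hc; nra. Qed.

Section Sym.
Variables (n : nat) (N : vec n -> R) (HN : is_norm N) (f : nat) (a : nat -> vec n).
Hypothesis Hball : forall x, N x <= 1 <-> (forall i, (i < f)%nat -> dot (a i) x <= 1).
Hypothesis Hirr : forall i, (i < f)%nat -> exists x, dot (a i) x > 1 /\
         (forall j, (j < f)%nat -> j <> i -> dot (a j) x <= 1).

Lemma sym i : (i < f)%nat -> exists k, (k < f)%nat /\ forall z, dot (a k) z = - dot (a i) z.
Proof.
move=> Hi. have [w [Hw1 Hw2]] := Hirr i Hi.
set c := dot (a i) w.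
have Hc : 0 < / c by apply: Rinv_0_lt_compat; rewrite /c; lra.
set p := vscale (/ c) w.
have Hpi : dot (a i) p = 1 by rewrite /p dot_scale -/c Rinv_l //; rewrite /c; lra.
have Hpj : forall j, (j < f)%nat -> j <> i -> dot (a j) p < 1.
  move=> j Hj Hji. rewrite /p dot_scale. have := Hw2 j Hj Hji.
  have E : / c * c = 1 by rewrite Rinv_l //; rewrite /c; lra.
  rewrite -/c in Hw1. nra.
have Np : N p = 1.
  apply: Rle_antisym.
    apply: (N_le _ _ HN f a Hball) => [|j Hj]; first lra.
    case: (classic (j = i)) => [->|Hji]; [lra| by apply: Rlt_le; apply: Hpj].
  rewrite -Hpi. exact: (a_le_N _ _ HN f a Hball).
have Nmp : N (vscale (-1) p) = 1 by rewrite (Nopp _ _ HN).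
have [k [Hk Hk1]] := tight _ _ HN f a Hball (vscale (-1) p) ltac:(lra).
have Hk2 := a_le_N _ _ HN f a Hball k (vscale (-1) p) Hk.
rewrite dot_scale in Hk1 Hk2. rewrite Nmp in Hk1 Hk2.
have Hkp : dot (a k) p = -1 by lra.
have D : forall v, 0 <= dot (a i) v + dot (a k) v.
  move=> v.
  have [e1 [He1 He1j]] := eps_small (fun j => dot (a j) v - dot (a i) v)
     (fun j => 1 - dot (a j) p) (fun j => j <> i) f
     ltac:(move=> j Hj Hji; have := Hpj j Hj Hji; lra).
  set e := Rmin e1 (/ (Rabs (dot (a i) v) + 1)).
  have Hab := Rabs_pos (dot (a i) v).
  have Hinv : 0 < / (Rabs (dot (a i) v) + 1) by apply: Rinv_0_lt_compat; lra.
  have He : 0 < e by apply: Rmin_pos.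
  have Hee1 : e <= e1 := Rmin_l _ _.
  have Hee2 : e <= / (Rabs (dot (a i) v) + 1) := Rmin_r _ _.
  have HC : 0 < 1 + e * dot (a i) v.
    have := RRle_abs (- dot (a i) v). rewrite Rabs_Ropp => Hr.
    have E : / (Rabs (dot (a i) v) + 1) * (Rabs (dot (a i) v) + 1) = 1 by rewrite Rinv_l //; lra.
    nra.
  set q := vadd p (vscale e v).
  have Hq : forall j, dot (a j) q = dot (a j) p + e * dot (a j) v.
    by move=> j; rewrite /q dot_add dot_scale.
  have Nq : N q <= 1 + e * dot (a i) v.
    apply: (N_le _ _ HN f a Hball) => // j Hj. rewrite Hq.
    case: (classic (j = i)) => [->|Hji]; first lra.
    have := shrink _ _ _ _ He Hee1 (He1j j Hj Hji) ltac:(have := Hpj j Hj Hji; lra).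
    lra.
  have Nq2 := a_le_N _ _ HN f a Hball k (vscale (-1) q) Hk.
  rewrite (Nopp _ _ HN) dot_scale Hq Hkp in Nq2.
  nra.
exists k; split => // z.
have := D z. have := D (vscale (-1) z). rewrite !dot_scale. lra.
Qed.
End Sym.

Definition evec {n} (k : 'I_n) : vec n := fun j => if j == k then 1 else 0.

Lemma dot_evec n (a : vec n) k : dot a (evec k) = a k.
Proof.
rewrite /dot (bigD1 k) //= big1 /evec ?eqxx; first ring.
by move=> j Hj; rewrite (negbTE Hj); ring.
Qed.

Lemma orth n (a : vec n) : (2 <= n)%nat -> exists z, z <> vzero /\ dot a z = 0.
Proof.
move=> Hn.
have H0 : (0 < n)%nat by lia. have H1 : (1 < n)%nat by lia.
set o0 := Ordinal H0. set o1 := Ordinal H1.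
have Hne : (o1 == o0) = false by [].
have Hne' : (o0 == o1) = false by [].
case: (classic (a o0 = 0 /\ a o1 = 0)) => [[A0 A1]|Hnz].
  exists (evec o0); split.
    move=> E. have := f_equal (fun g => g o0) E. rewrite /evec /vzero eqxx. lra.
  by rewrite dot_evec.
exists (vadd (vscale (a o1) (evec o0)) (vscale (- a o0) (evec o1))); split.
  move=> E. apply: Hnz.
  have E0 := f_equal (fun g => g o0) E. have E1 := f_equal (fun g => g o1) E.
  move: E0 E1. rewrite /vadd /vscale /evec /vzero /= ?Hne ?Hne' ?eqxx. lra.
by rewrite dot_add !dot_scale !dot_evec; ring.
Qed.
Lemma least (P : nat -> Prop) : (exists i, P i) -> exists i, P i /\ forall j, (j < i)%nat -> ~ P j.
Proof.
move=> [i Hi]. apply: NNPP => Hno.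
have H : forall m, forall j, (j <= m)%nat -> ~ P j.
  elim=> [|m IH] j Hj Pj.
    have E : j = 0%nat by lia. subst j. apply: Hno; exists 0%nat; split => // k Hk; lia.
  have : (j <= m)%nat \/ j = m.+1 by lia.
  case=> [Hl|E]; first exact: (IH j Hl Pj).
  subst j. apply: Hno. exists m.+1; split => // k Hk; apply: (IH k); lia.
exact: (H i i (leqnn i) Hi).
Qed.

Theorem mainTheorem16 (n : nat) (N : vec n -> R) (f : nat) :
  (2 <= n)%nat ->
  is_norm N ->
  ball_polytope_facets N f ->
  forall S : vec n -> Prop, M_set N S ->
    exists l : list (vec n),
      NoDup l /\ (forall x, S x <-> In x l) /\ (length l <= f - 1)%nat.
Proof.
move=> Hn HN [a [Hball Hirr]] S [HS1 HS2].
set hit := fun x i => (i < f)%nat /\ 1 < dot (a i) x.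
have HIT : forall x, S x -> exists i, hit x i.
  move=> x Sx. have [i [Hi Hi1]] := exceed _ _ HN f a Hball x (HS2 x Sx). by exists i.
have BND : forall x y l, S x -> S y -> x <> y -> (l < f)%nat ->
    dot (a l) x + dot (a l) y <= 2.
  move=> x y l Sx Sy Hxy Hl. have := a_le_N _ _ HN f a Hball l (midpt x y) Hl.
  rewrite HS1 // dot_mid. lra.
have UNIQ : forall x y i, S x -> S y -> hit x i -> hit y i -> x = y.
  move=> x y i Sx Sy [Hi Hx] [_ Hy]. apply: NNPP => Hxy.
  have := BND x y i Sx Sy Hxy Hi. lra.
set Q := fun i => exists x, S x /\ hit x i /\ forall j, (j < i)%nat -> ~ hit x j.
set pick := fun i => epsilon (inhabits vzero)
   (fun x => S x /\ hit x i /\ forall j, (j < i)%nat -> ~ hit x j).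
have Hpick : forall i, Q i -> S (pick i) /\ hit (pick i) i /\
     forall j, (j < i)%nat -> ~ hit (pick i) j.
  move=> i Qi. exact: (epsilon_spec (inhabits vzero) _ Qi).
have PINJ : forall i j, Q i -> Q j -> pick i = pick j -> i = j.
  move=> i j Qi Qj E. have [_ [Hi Hmi]] := Hpick i Qi. have [_ [Hj Hmj]] := Hpick j Qj.
  have : (i < j)%nat \/ i = j \/ (j < i)%nat by lia.
  case=> [Hl|[//|Hl]].
  - by case: (Hmj i Hl); rewrite -E.
  - by case: (Hmi j Hl); rewrite E.
set qb := fun i => if excluded_middle_informative (Q i) then true else false.
have qbP : forall i, qb i = true <-> Q i.
  move=> i. rewrite /qb. by case: (excluded_middle_informative (Q i)).
set L := List.filter qb (List.seq 0 f).
exists (List.map pick L). split; [|split].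
- apply: NoDup_map_NoDup_ForallPairs; last by apply: NoDup_filter; apply: seq_NoDup.
  move=> i j Hi Hj. apply: PINJ.
    by move: Hi; rewrite /L filter_In => -[_ /qbP].
  by move: Hj; rewrite /L filter_In => -[_ /qbP].
- move=> x; split.
  + move=> Sx. have [i [Hi Hmin]] := least _ (HIT x Sx).
    have Qi : Q i by exists x.
    have [Spi [Hpi _]] := Hpick i Qi.
    apply/in_map_iff. exists i; split; first exact: (UNIQ _ _ i Spi Sx Hpi Hi).
    rewrite /L filter_In in_seq; split; last by apply/qbP.
    case: Hi => Hif _. lia.
  + move/in_map_iff=> [i [<- Hi]]. move: Hi; rewrite /L filter_In => -[_ /qbP Qi].
    by case: (Hpick i Qi).
- rewrite length_map.
  case: (posnP f) => [Ef|Hf]; first by rewrite /L Ef.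
  suff [i [Hi NQ]] : exists i, (i < f)%nat /\ ~ Q i.
    have Hlen := filter_length qb (List.seq 0 f). rewrite length_seq in Hlen.
    have : In i (List.filter (fun x => negb (qb x)) (List.seq 0 f)).
      apply/filter_In; split; first by apply/in_seq; lia.
      case E : (qb i) => //. by case: NQ; apply/qbP.
    case: (List.filter (fun x => negb (qb x)) (List.seq 0 f)) Hlen => [//|? ?] /= Hlen _.
    rewrite -/L in Hlen. lia.
  apply: NNPP => Hno.
  have allQ : forall i, (i < f)%nat -> Q i.
    move=> i Hi. apply: NNPP => NQ. apply: Hno. by exists i.
  have HP : forall i, (i < f)%nat -> S (pick i) /\ 1 < dot (a i) (pick i).
    move=> i Hi. have [Sp [[_ H] _]] := Hpick i (allQ i Hi). by split.
  have PI : forall i j, (i < f)%nat -> (j < f)%nat -> pick i = pick j -> i = j.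
    move=> i j Hi Hj. apply: PINJ; exact: allQ.
  have LT1 : forall l z, (l < f)%nat -> S z -> z <> pick l -> dot (a l) z < 1.
    move=> l z Hl Sz Hz. have [Sp Hp] := HP l Hl.
    have := BND (pick l) z l Sp Sz (fun E => Hz (Logic.eq_sym E)) Hl. lra.
  have [k [Hk Hsym]] := sym _ _ HN f a Hball Hirr 0%nat Hf.
  have [Sx Hx] := HP 0%nat Hf. have [Sy Hy] := HP k Hk.
  set x := pick 0%nat in Sx Hx *. set y := pick k in Sy Hy *.
  have Hk0 : k <> 0%nat.
    move=> E. have := Hsym x. rewrite E. lra.
  have Hxy : x <> y by move=> E; apply: Hk0; apply: (PI _ _ Hk Hf); exact: (Logic.eq_sym E).
  have Hmid : N (midpt x y) = 1 by apply: HS1.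
  have [l [Hl Hl1]] := tight _ _ HN f a Hball (midpt x y) ltac:(lra).
  rewrite Hmid dot_mid in Hl1.
  have Hyx := Hsym y. have Hxx := Hsym x.
  have Cases : 2 + dot (a k) y <= dot (a 0%nat) x \/ 2 + dot (a 0%nat) x <= dot (a k) y.
    case: (classic (l = 0%nat)) => [El|Nl0].
      subst l. left. lra.
    case: (classic (l = k)) => [El|Nlk].
      subst l. right. lra.
    have Hxl : x <> pick l by move=> E; apply: Nl0; apply: (PI _ _ Hl Hf); exact: (Logic.eq_sym E).
    have Hyl : y <> pick l by move=> E; apply: Nlk; apply: (PI _ _ Hl Hk); exact: (Logic.eq_sym E).
    have := LT1 l x Hl Sx Hxl. have := LT1 l y Hl Sy Hyl. lra.
  case: (classic (exists j, (j < f)%nat /\ j <> 0%nat /\ j <> k)) => [[j [Hj [Hj0 Hjk]]]|Hnj].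
    have [Sz Hz] := HP j Hj. set z := pick j in Sz Hz *.
    have Hzx : x <> z by move=> E; apply: Hj0; apply: (PI _ _ Hj Hf); exact: (Logic.eq_sym E).
    have Hzy : y <> z by move=> E; apply: Hjk; apply: (PI _ _ Hj Hk); exact: (Logic.eq_sym E).
    have := BND x z 0%nat Sx Sz Hzx Hf. have := BND y z k Sy Sz Hzy Hk.
    have := Hsym z. lra.
  have [z [Hz0 Hz]] := orth n (a 0%nat) Hn.
  apply: (unbounded _ _ HN f a Hball z Hz0) => m Hm.
  case: (classic (m = 0%nat)) => [->|Nm0]; first lra.
  case: (classic (m = k)) => [->|Nmk]; first by rewrite Hsym Hz; lra.
  by case: Hnj; exists m.
Qed.
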